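(* Let $\mathcal{H}_X$, $\mathcal{H}_R$ be finite-dimensional Hilbert spaces, $U$ and $V_S$ unitaries on $\mathcal{H}_X$, and $S_{\mathrm{in}}=\{|\psi_1\rangle,\dots,|\psi_t\rangle\}$ a finite set of unit vectors in $\mathcal{H}_X\otimes\mathcal{H}_R$ such that $|\langle\psi_j|(U^\dagger V_S\otimes I)|\psi_j\rangle|=1$ for all $j$ (perfect training). If $S_{\mathrm{in}}$ is orthogonal partitioning resistant, then there exists $\theta\in(-\pi,\pi]$ such that $\langle\psi_j|(U^\dagger V_S\otimes I)|\psi_j\rangle=e^{i\theta}$ for all $|\psi_j\rangle\in S_{\mathrm{in}}$.
   Context: A set $S_{\mathrm{in}}$ of vectors is orthogonal partitioning resistant (OPR) iff for every partition $S_{\mathrm{in}}=A\cup B$ with $A\cap B=\emptyset$ one has $A\not\subseteq\mathrm{span}(B)^\perp$ (equivalently $B\not\subseteq\mathrm{span}(A)^\perp$). *)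

(* Defs.v *)
From HB Require Import structures.
From mathcomp Require Import all_boot all_order all_algebra.
From mathcomp Require Import complex mxtens.
From mathcomp Require Import reals trigo.
Set Implicit Arguments. Unset Strict Implicit. Unset Printing Implicit Defensive.
Import Order.TTheory GRing.Theory Num.Theory.
Local Open Scope ring_scope.

Definition adjmx (R : realType) (m n : nat) (M : 'M[R[i]]_(m, n)) : 'M[R[i]]_(n, m) :=
  (map_mx (fun z : R[i] => z^*) M)^T.

Definition is_unitary_mx (R : realType) (n : nat) (U : 'M[R[i]]_n) : Prop :=
  adjmx U *m U = 1%:M.

Definition innerprod (R : realType) (n : nat) (x y : 'cV[R[i]]_n) : R[i] :=
  (adjmx x *m y) 0 0.

Definition braket (R : realType) (n : nat) (psi : 'cV[R[i]]_n) (A : 'M[R[i]]_n) : R[i] :=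
  (adjmx psi *m A *m psi) 0 0.

Definition expi (R : realType) (theta : R) : R[i] := (cos theta +i* sin theta)%C.

(* matrix whose rows are the (transposed) vectors psi b, b in B; its row space
   is span{psi b | b in B} (transposed). *)
Definition spanmx (R : realType) (n t : nat) (psi : 'I_t -> 'cV[R[i]]_n)
  (B : {set 'I_t}) : 'M[R[i]]_(t, n) :=
  \matrix_(k < t) (if k \in B then (psi k)^T else 0).

Definition in_span (R : realType) (n t : nat) (psi : 'I_t -> 'cV[R[i]]_n)
  (B : {set 'I_t}) (v : 'cV[R[i]]_n) : Prop :=
  (v^T <= spanmx psi B)%MS.

Definition subset_span_perp (R : realType) (n t : nat) (psi : 'I_t -> 'cV[R[i]]_n)
  (A B : {set 'I_t}) : Prop :=
  forall a, a \in A -> forall v, in_span psi B v -> innerprod v (psi a) = 0.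

Definition OPR (R : realType) (n t : nat) (psi : 'I_t -> 'cV[R[i]]_n) : Prop :=
  forall A B : {set 'I_t}, A != set0 -> B != set0 -> [disjoint A & B] ->
    A :|: B = setT -> ~ subset_span_perp psi A B.

(* Main.v *)
Require Import Defs.
From HB Require Import structures.
From mathcomp Require Import all_boot all_order all_algebra.
From mathcomp Require Import complex mxtens.
From mathcomp Require Import reals trigo.
From mathcomp Require Import lra.
Import Order.TTheory GRing.Theory Num.Theory.
Local Open Scope ring_scope.

Section Helpers.
Variable R : realType.
Local Notation C := R[i].

Lemma adjmxM m n p (A : 'M[C]_(m,n)) (B : 'M[C]_(n,p)) :
  adjmx (A *m B) = adjmx B *m adjmx A.
Proof.
apply/matrixP=> i j; rewrite !mxE rmorph_sum; apply: eq_bigr => k _.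
by rewrite !mxE rmorphM mulrC.
Qed.

Lemma adjmxZ m n a (A : 'M[C]_(m,n)) : adjmx (a *: A) = a^* *: adjmx A.
Proof. by apply/matrixP=> i j; rewrite !mxE rmorphM. Qed.

Lemma adjmxB m n (A B : 'M[C]_(m,n)) : adjmx (A - B) = adjmx A - adjmx B.
Proof. by apply/matrixP=> i j; rewrite !mxE rmorphB. Qed.

Lemma adjmxK m n (A : 'M[C]_(m,n)) : adjmx (adjmx A) = A.
Proof. by apply/matrixP=> i j; rewrite !mxE conjCK. Qed.

Lemma adjmx1 n : adjmx (1%:M : 'M[C]_n) = 1%:M.
Proof. by apply/matrixP=> i j; rewrite !mxE rmorph_nat eq_sym. Qed.

Lemma adjmx_tens m n p q (A : 'M[C]_(m,n)) (B : 'M[C]_(p,q)) :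
  adjmx (A *t B) = adjmx A *t adjmx B.
Proof. by apply/matrixP=> i j; rewrite !mxE rmorphM. Qed.

Lemma tens11 m n : (1%:M : 'M[C]_m) *t (1%:M : 'M[C]_n) = 1%:M.
Proof.
apply/matrixP=> i j.
case: (mxtens_indexP i)=> i0 i1; case: (mxtens_indexP j)=> j0 j1.
rewrite tensmxE !mxE (can_eq (@mxtens_indexK m n)) xpair_eqE -natrM mulnb.
by [].
Qed.

Lemma adj_self_eq0 n (v : 'cV[C]_n) : (adjmx v *m v) 0 0 = 0 -> v = 0.
Proof.
rewrite mxE => H.
have : \sum_j (v j 0 * (v j 0)^*) == 0.
  rewrite -[X in _ == X]H; apply/eqP; apply: eq_bigr => j _; by rewrite !mxE mulrC.
rewrite psumr_eq0 => [|j _]; last exact: mul_conjC_ge0.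
move/allP => Hall; apply/matrixP => j k; rewrite (ord1 k) !mxE.
by have := Hall j (mem_index_enum j); rewrite mul_conjC_eq0 => /eqP.
Qed.

Lemma ip_sum n (a b : 'cV[C]_n) : innerprod a b = \sum_j (a j 0)^* * b j 0.
Proof. by rewrite /innerprod mxE; apply: eq_bigr => j _; rewrite !mxE. Qed.

Lemma ipBl n (a b c : 'cV[C]_n) : innerprod (a - b) c = innerprod a c - innerprod b c.
Proof.
rewrite !ip_sum -sumrB; apply: eq_bigr => j _; by rewrite !mxE rmorphB mulrBl.
Qed.
Lemma ipBr n (a b c : 'cV[C]_n) : innerprod c (a - b) = innerprod c a - innerprod c b.
Proof.
rewrite !ip_sum -sumrB; apply: eq_bigr => j _; by rewrite !mxE mulrBr.
Qed.
Lemma ipZl n k (a c : 'cV[C]_n) : innerprod (k *: a) c = k^* * innerprod a c.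
Proof.
rewrite !ip_sum mulr_sumr; apply: eq_bigr => j _; by rewrite !mxE rmorphM mulrA.
Qed.
Lemma ipZr n k (a c : 'cV[C]_n) : innerprod c (k *: a) = k * innerprod c a.
Proof.
rewrite !ip_sum mulr_sumr; apply: eq_bigr => j _; by rewrite !mxE mulrCA.
Qed.
Lemma ipC n (a b : 'cV[C]_n) : innerprod b a = (innerprod a b)^*.
Proof.
rewrite !ip_sum rmorph_sum; apply: eq_bigr => j _; by rewrite [RHS]rmorphM /= conjCK mulrC.
Qed.

Lemma ip_unit n (W : 'M[C]_n) x y : adjmx W *m W = 1%:M ->
  innerprod (W *m x) (W *m y) = innerprod x y.
Proof. by move=> HW; rewrite /innerprod adjmxM mulmxA -(mulmxA (adjmx x)) HW mulmx1. Qed.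

Lemma eigen n (W : 'M[C]_n) x : adjmx W *m W = 1%:M -> innerprod x x = 1 ->
  `|braket x W| = 1 -> W *m x = braket x W *: x.
Proof.
move=> HW Hx Hn.
have Hl : innerprod x (W *m x) = braket x W by rewrite /innerprod /braket mulmxA.
set l := braket x W in Hl Hn *.
have Hll : l * l^* = 1 by rewrite -normCK Hn expr1n.
apply/eqP; rewrite -subr_eq0; apply/eqP; apply: adj_self_eq0.
rewrite -/(innerprod _ _) ipBl !ipBr !ipZl !ipZr ip_unit // (ipC _ x (W *m x)) Hx Hl.
by rewrite mulr1 subrr subr0 Hll subrr.
Qed.

Lemma ortho n (W : 'M[C]_n) a b la lb : adjmx W *m W = 1%:M ->
  W *m a = la *: a -> W *m b = lb *: b -> `|lb| = 1 -> la != lb ->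
  innerprod b a = 0.
Proof.
move=> HW Ha Hb Hn Hne.
have := ip_unit _ W b a HW; rewrite Ha Hb ipZl ipZr mulrA => E.
apply/eqP; apply: contraNT Hne => Hip.
have H1 : lb^* * la = 1 by apply: (mulIf Hip); rewrite mul1r.
have Hll : lb * lb^* = 1 by rewrite -normCK Hn expr1n.
by apply/eqP; rewrite -[la]mul1r -Hll -mulrA H1 mulr1.
Qed.

Lemma arg_ex (z : C) : `|z| = 1 ->
  exists theta : R, -pi < theta <= pi /\ expi theta = z.
Proof.
rewrite normc_def; case: z => a b /= /(congr1 (@complex.Re R)) /= H.
have Hab : a ^+ 2 + b ^+ 2 = 1.
  by rewrite -[LHS]sqr_sqrtr ?H ?expr1n // addr_ge0 // sqr_ge0.
have Ha : -1 <= a <= 1.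
  apply/andP; split; nra.
have Hpi := pi_gt0 R.
have Hs : Num.sqrt (1 - a ^+ 2) = `|b| by rewrite -Hab addrAC subrr add0r sqrtr_sqr.
have Ha' : a \in `[-1, 1] by rewrite in_itv.
case: (leP 0 b) => Hb.
  exists (acos a); split.
    by rewrite acos_lepi // andbT (lt_le_trans _ (acos_ge0 Ha)) // oppr_lt0.
  by rewrite /expi acosK // sin_acos // Hs ger0_norm.
exists (- acos a); split.
  rewrite lerNl (le_trans _ (acos_ge0 Ha)) ?oppr_le0 ?ltW // andbT ltrN2.
  apply: acos_ltpi; case/andP: Ha => _ ->; rewrite andbT.
  nra.
by rewrite /expi cosN sinN acosK // sin_acos // Hs ltr0_norm // opprK.
Qed.

End Helpers.

Theorem lemma4 (R : realType) (dX dR t : nat) (U VS : 'M[R[i]]_dX)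
  (psi : 'I_t -> 'cV[R[i]]_(dX * dR)) :
  is_unitary_mx U -> is_unitary_mx VS ->
  injective psi ->
  (forall j, innerprod (psi j) (psi j) = 1) ->
  (forall j, `|braket (psi j) ((adjmx U *m VS) *t (1%:M : 'M[R[i]]_dR))| = 1) ->
  OPR psi ->
  exists theta : R, -pi < theta <= pi /\
    forall j, braket (psi j) ((adjmx U *m VS) *t (1%:M : 'M[R[i]]_dR)) = expi theta.
Proof.
move=> HU HV _ Hn Habs Hopr.
set W := (adjmx U *m VS) *t (1%:M : 'M[R[i]]_dR) in Habs *.
have HW : adjmx W *m W = 1%:M.
  rewrite /W adjmx_tens adjmx1 tensmx_mul mul1mx adjmxM adjmxK.
  by rewrite mulmxA -(mulmxA (adjmx VS)) (mulmx1C HU) mulmx1 HV tens11.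
pose l j := braket (psi j) W.
have Heig : forall j, W *m psi j = l j *: psi j.
  by move=> j; apply: eigen.
case: (pickP (fun _ : 'I_t => true)) => [j0 _|none]; last first.
  exists 0; split; first by rewrite oppr_lt0 pi_gt0 ltW // pi_gt0.
  by move=> j; have := none j.
have [th [Hth Hexp]] := @arg_ex R _ (Habs j0).
exists th; split => // j; rewrite Hexp.
apply/eqP; apply/negPn/negP => Hne.
apply: (Hopr [set k | l k == l j0] [set k | l k != l j0]).
- by apply/set0Pn; exists j0; rewrite inE.
- by apply/set0Pn; exists j; rewrite inE.
- by rewrite disjoints_subset; apply/subsetP => k; rewrite !inE negbK.
- by apply/setP => k; rewrite !inE orbN.
move=> a Ha v; rewrite /in_span => /submxP [w Hw].
rewrite inE in Ha.
apply/eqP; rewrite ipC -[_ == 0]conjC_eq0 conjCK; apply/eqP.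
have -> : innerprod (psi a) v = ((adjmx (psi a) *m v)^T) 0 0 by rewrite mxE.
rewrite trmx_mul Hw -mulmxA.
have -> : spanmx psi [set k | l k != l j0] *m (adjmx (psi a))^T = 0.
  apply/matrixP => k z; rewrite (ord1 z) /spanmx !mxE.
  under eq_bigr => j1 _ do rewrite !mxE.
  case: ifP => Hk.
    rewrite inE in Hk.
    have E := @ortho R _ _ _ _ _ _ HW (Heig k) (Heig a) (Habs a).
    rewrite -[RHS](E _); last by rewrite (eqP Ha).
    rewrite ip_sum; apply: eq_bigr => j' _; by rewrite !mxE mulrC.
  by apply: big1 => j' _; rewrite !mxE mul0r.
by rewrite mulmx0 mxE.
Qed.
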